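(* Let $n\ge1$, $C\in\mathcal C_n$ and $A=\Xi^{-1}(C)$. For $i,j\in[n]$ put $m_{ij}=\min(i,j,n-i+1,n-j+1)$. Then for all $i,j,k\in[n]$, $$1-m_{ij}\le \sum_{x=1}^k A_{i,j,x}\le m_{ij},\qquad 1-m_{ij}\le \sum_{x=1}^k A_{i,x,j}\le m_{ij},\qquad 1-m_{ij}\le \sum_{x=1}^k A_{x,i,j}\le m_{ij}.$$
   Context: Let $[n]=\{1,\dots,n\}$, $[0,n]=\{0,\dots,n\}$. A corner-sum hypermatrix of order $n$ is an integer array $C=(C_{i,j,k})_{i,j,k\in[0,n]}$ such that for all $i,j\in[0,n]$: $C_{i,j,0}=C_{i,0,j}=C_{0,i,j}=0$, $C_{i,j,n}=C_{i,n,j}=C_{n,i,j}=ij$, and for all $k\in[n]$ each of $C_{i,j,k}-C_{i,j,k-1}$, $C_{i,k,j}-C_{i,k-1,j}$, $C_{k,i,j}-C_{k-1,i,j}$ is an integer in $\{\max(0,i+j-n),\dots,\min(i,j)\}$; $\mathcal C_n$ is the set of these. $\Xi^{-1}(C)$ is the array indexed by $[n]^3$ with $\Xi^{-1}(C)_{i,j,k}=C_{i,j,k}-C_{i-1,j,k}-C_{i,j-1,k}-C_{i,j,k-1}+C_{i-1,j-1,k}+C_{i-1,j,k-1}+C_{i,j-1,k-1}-C_{i-1,j-1,k-1}$. *)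

(* Defs.v *)
From mathcomp Require Import all_boot all_order all_algebra.
Set Implicit Arguments. Unset Strict Implicit. Unset Printing Implicit Defensive.
Import Order.TTheory GRing.Theory Num.Theory.
Local Open Scope ring_scope.

(* A hypermatrix indexed by [0,n]^3 is represented as a function
   nat -> nat -> nat -> int; only its values on [0,n]^3 matter. *)
Definition hyper := nat -> nat -> nat -> int.

(* d lies in {max(0, i+j-n), ..., min(i,j)}; note (i + j - n)%N is truncated,
   so it equals max(0, i+j-n). *)
Definition in_range (n i j : nat) (d : int) : bool :=
  ((i + j - n)%N%:Z <= d) && (d <= (minn i j)%:Z).

Definition is_corner_sum (n : nat) (C : hyper) : Prop :=
  forall i j : nat, (i <= n)%N -> (j <= n)%N ->
    [/\ C i j 0%N = 0, C i 0%N j = 0 & C 0%N i j = 0] /\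
    [/\ C i j n = (i * j)%N%:Z, C i n j = (i * j)%N%:Z & C n i j = (i * j)%N%:Z] /\
        (forall k : nat, (1 <= k <= n)%N ->
          [/\ in_range n i j (C i j k - C i j k.-1),
              in_range n i j (C i k j - C i k.-1 j) &
              in_range n i j (C k i j - C k.-1 i j)]).

(* Xi^{-1}(C), meaningful for i, j, k in [n] (i.e. >= 1). *)
Definition Xi_inv (C : hyper) (i j k : nat) : int :=
  C i j k - C i.-1 j k - C i j.-1 k - C i j k.-1
  + C i.-1 j.-1 k + C i.-1 j k.-1 + C i j.-1 k.-1 - C i.-1 j.-1 k.-1.

Definition mij (n i j : nat) : nat := minn (minn i j) (minn (n - i + 1) (n - j + 1)).

(* Main.v *)
Require Import Defs.
From mathcomp Require Import all_boot all_order all_algebra zify.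
Import Order.TTheory GRing.Theory Num.Theory.
Local Open Scope ring_scope.

Lemma one n j k (x y : int) : (1 <= j <= n)%N -> (k <= n)%N ->
  in_range n j k x -> in_range n j.-1 k y ->
  [/\ x - y <= j%:Z, x - y <= (n - j + 1)%N%:Z, 1 - j%:Z <= x - y & 1 - (n - j + 1)%N%:Z <= x - y].
Proof.
rewrite /in_range => /andP[j1 jn] kn /andP[a1 a2] /andP[b1 b2].
have [jk|jk] := leqP j k.
- rewrite (minn_idPl jk) in a2. rewrite (minn_idPl (leq_trans (leq_pred j) jk)) in b2.
  split; lia.
- rewrite (minn_idPr (ltnW jk)) in a2. have h : (k <= j.-1)%N by lia. rewrite (minn_idPr h) in b2.
  split; lia.
Qed.
From mathcomp Require Import ring.

Lemma in_rangeC n i j d : in_range n i j d = in_range n j i d.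
Proof. by rewrite /in_range addnC minnC. Qed.

Lemma mij_cases n i j : [\/ mij n i j = i, mij n i j = j, mij n i j = (n - i + 1)%N
  | mij n i j = (n - j + 1)%N].
Proof.
rewrite /mij /minn; case: ifP => _; case: ifP => _; try case: ifP => _;
  by [constructor 1|constructor 2|constructor 3|constructor 4].
Qed.

Lemma core n i j k (a b c d : int) : (1 <= i <= n)%N -> (1 <= j <= n)%N -> (k <= n)%N ->
  in_range n j k (a - b) -> in_range n j.-1 k (c - d) ->
  in_range n i k (a - c) -> in_range n i.-1 k (b - d) ->
  1 - (mij n i j)%:Z <= a - b - c + d <= (mij n i j)%:Z.
Proof.
move=> hi hj hk h1 h2 h3 h4.
have [u1 u2 u3 u4] := @one n i k _ _ hi hk h3 h4.
have [v1 v2 v3 v4] := @one n j k _ _ hj hk h1 h2.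
have e1 : a - b - c + d = (a - c) - (b - d) by ring.
have e2 : a - b - c + d = (a - b) - (c - d) by ring.
by case: (mij_cases n i j) => ->; [rewrite e1 u1 u3 | rewrite e2 v1 v3 | rewrite e1 u2 u4 | rewrite e2 v2 v4].
Qed.

Lemma tele (F : nat -> int) k : \sum_(1 <= x < k.+1) (F x - F x.-1) = F k - F 0%N.
Proof.
elim: k => [|k IH]; first by rewrite big_geq // subrr.
rewrite big_nat_recr //= IH; ring.
Qed.

Theorem mainTheorem17 (n : nat) (C : hyper) :
  (1 <= n)%N -> is_corner_sum n C ->
  forall i j k : nat, (1 <= i <= n)%N -> (1 <= j <= n)%N -> (1 <= k <= n)%N ->
  [/\ 1 - (mij n i j)%:Z <= \sum_(1 <= x < k.+1) Xi_inv C i j x <= (mij n i j)%:Z,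
      1 - (mij n i j)%:Z <= \sum_(1 <= x < k.+1) Xi_inv C i x j <= (mij n i j)%:Z &
      1 - (mij n i j)%:Z <= \sum_(1 <= x < k.+1) Xi_inv C x i j <= (mij n i j)%:Z].
Proof.
move=> n1 HC i j k hi hj /andP[k1 kn].
have hk : (k <= n)%N by [].
have iN : (i <= n)%N by case/andP: hi.
have jN : (j <= n)%N by case/andP: hj.
have i'N : (i.-1 <= n)%N by apply: leq_trans (leq_pred _) iN.
have j'N : (j.-1 <= n)%N by apply: leq_trans (leq_pred _) jN.
have Z a b : (a <= n)%N -> (b <= n)%N -> [/\ C a b 0%N = 0, C a 0%N b = 0 & C 0%N a b = 0].
  by move=> ha hb; case: (HC a b ha hb) => [[]].
have R a b x : (a <= n)%N -> (b <= n)%N -> (1 <= x <= n)%N ->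
    [/\ in_range n a b (C a b x - C a b x.-1),
        in_range n a b (C a x b - C a x.-1 b) &
        in_range n a b (C x a b - C x.-1 a b)].
  by move=> ha hb hx; case: (HC a b ha hb) => _ [_ H]; apply: H.
split.
- have E x : Xi_inv C i j x = (C i j x - C i.-1 j x - C i j.-1 x + C i.-1 j.-1 x)
     - (C i j x.-1 - C i.-1 j x.-1 - C i j.-1 x.-1 + C i.-1 j.-1 x.-1).
    by rewrite /Xi_inv; ring.
  under eq_bigr do rewrite E.
  rewrite (tele (fun x => C i j x - C i.-1 j x - C i j.-1 x + C i.-1 j.-1 x)) /=.
  case: (Z i j) => // -> _ _; case: (Z i.-1 j) => // -> _ _.
  case: (Z i j.-1) => // -> _ _; case: (Z i.-1 j.-1) => // -> _ _.
  rewrite ?subr0 ?addr0 ?subr0.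
  apply: (@core n i j k (C i j k) (C i.-1 j k) (C i j.-1 k) (C i.-1 j.-1 k)) => //.
  + by case: (R j k i) => // _ _ ->.
  + by case: (R j.-1 k i) => // _ _ ->.
  + by case: (R i k j) => // _ -> _.
  + by case: (R i.-1 k j) => // _ -> _.
- have E x : Xi_inv C i x j = (C i x j - C i.-1 x j - C i x j.-1 + C i.-1 x j.-1)
     - (C i x.-1 j - C i.-1 x.-1 j - C i x.-1 j.-1 + C i.-1 x.-1 j.-1).
    by rewrite /Xi_inv; ring.
  under eq_bigr do rewrite E.
  rewrite (tele (fun x => C i x j - C i.-1 x j - C i x j.-1 + C i.-1 x j.-1)) /=.
  case: (Z i j) => // _ -> _; case: (Z i.-1 j) => // _ -> _.
  case: (Z i j.-1) => // _ -> _; case: (Z i.-1 j.-1) => // _ -> _.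
  rewrite ?subr0 ?addr0 ?subr0.
  apply: (@core n i j k (C i k j) (C i.-1 k j) (C i k j.-1) (C i.-1 k j.-1)) => //.
  + by case: (R k j i) => // _ _; rewrite in_rangeC.
  + by case: (R k j.-1 i) => // _ _; rewrite in_rangeC.
  + by case: (R i k j) => // ->.
  + by case: (R i.-1 k j) => // ->.
- have E x : Xi_inv C x i j = (C x i j - C x i.-1 j - C x i j.-1 + C x i.-1 j.-1)
     - (C x.-1 i j - C x.-1 i.-1 j - C x.-1 i j.-1 + C x.-1 i.-1 j.-1).
    by rewrite /Xi_inv; ring.
  under eq_bigr do rewrite E.
  rewrite (tele (fun x => C x i j - C x i.-1 j - C x i j.-1 + C x i.-1 j.-1)) /=.
  case: (Z i j) => // _ _ ->; case: (Z i.-1 j) => // _ _ ->.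
  case: (Z i j.-1) => // _ _ ->; case: (Z i.-1 j.-1) => // _ _ ->.
  rewrite ?subr0 ?addr0 ?subr0.
  apply: (@core n i j k (C k i j) (C k i.-1 j) (C k i j.-1) (C k i.-1 j.-1)) => //.
  + by case: (R k j i) => // _; rewrite in_rangeC.
  + by case: (R k j.-1 i) => // _; rewrite in_rangeC.
  + by case: (R k i j) => // H _ _; rewrite in_rangeC.
  + by case: (R k i.-1 j) => // H _ _; rewrite in_rangeC.
Qed.
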